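(* Assume Condition AGCT (see context) holds and that the event $\mathrm{Good}_m$ occurs. Then $\widehat T_n\subseteq T^*$, where $T^*$ is the minimal complete context tree of the processes.
   Context: Notation. $A$ is a finite alphabet. For $k\ge0$, $A^{-1}_{-k}$ is the set of strings $w=w_{-k}\cdots w_{-1}$ of length $k$ (for $k=0$ the empty string $e$); $A^{-1}_{-\infty}$ is the set of left-infinite sequences $x=\cdots x_{-2}x_{-1}$; $A^*=A^{-1}_{-\infty}\cup\bigcup_{k\ge0}A^{-1}_{-k}$. $|w|$ is the length, $w^{-1}_{-k}$ the suffix of length $k$; $w\preceq w'$ ($w'\succeq w$) means $w$ is a suffix of $w'$; for nonempty $w$, $\mathrm{par}(w)=w_{-|w|+1}\cdots w_{-1}$. A tree is a set $\widetilde T\subseteq A^*$ containing $e$ and the parent of each of its nonempty elements; a leaf is an element that is the parent of no element; complete means each non-leaf has exactly $|A|$ children. For a tree $\widetilde T$ and $x\in A^{-1}_{-\infty}$, $K_{\widetilde T}(x)=\sup\{k:x^{-1}_{-k}\in\widetilde T\}$, $\widetilde T(x)=x^{-1}_{-K_{\widetilde T}(x)}$. $\Delta^A$: probability distributions on $A$. $\|v\|_{L,q}=(\frac1L\sum_\ell|v_\ell|^q)^{1/q}$, $\|v\|_{L,\infty}=\max_\ell|v_\ell|$. Model. For $\ell=1,\dots,L$, $X(\ell)$ is a stationary ergodic $A$-valued process with transition probabilities $p_\ell(a\mid x)=\Pr(X_0(\ell)=a\mid X^{-1}_{-\infty}(\ell)=x)$. A tree $\widetilde T$ is a context tree for all processes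 if $p_\ell(\cdot\mid x)=p_\ell(\cdot\mid y)$ whenever $\widetilde T(x)=\widetilde T(y)$, for all $\ell$; $T^*$ denotes the minimal complete (possibly infinite) such tree. One observes $X_1^n(\ell)$ for each $\ell$. $N_{j,\ell}(w)$ is the number of occurrences of the finite string $w$ as a consecutive block in $X_1^j(\ell)$ (0 for infinite $w$); $wa$ is concatenation. If $\min_\ell N_{n-1,\ell}(w)>0$: $\hat p_{n,\ell}(a\mid w)=N_{n,\ell}(wa)/N_{n-1,\ell}(w)$, $\bar p_{n,\ell}(a\mid w)=\frac{1}{N_{n-1,\ell}(w)}\sum_{i=|w|+1}^{n}\mathbf 1\{X^{i-1}_{i-|w|}(\ell)=w\}p_\ell(a\mid X^{i-1}_{-\infty}(\ell))$; otherwise both $=1/|A|$. Metrics $d_\ell:\Delta^A\times\Delta^A\to[0,1]$; $d(q,q')=(d_\ell(q_\ell,q'_\ell))_\ell$; $\hat p_n(\cdot|w)=(\hat p_{n,\ell}(\cdot|w))_\ell$. Confidence radii $\mathrm{conf}(w)=(\mathrm{conf}_\ell(w))_{\ell}$, $w\in A^*$. Event $\mathrm{Good}_m$: for all $w\in A^*$ with $\min_\ell N_{n-1,\ell}(w)>0$, $\|(d_\ell(\bar p_{n,\ell}(\cdot|w),\hat p_{n,\ell}(\cdot|w))/\mathrm{conf}_\ell(w))_\ell\|_{L,m}\le1$. Estimator. Fix $c>1$. $E_n=\{w\in A^*:\min_\ell N_{n-1,\ell}(w)>0\}$. For nonempty $w\in E_n$, $\mathsf{CanRmv}(w)=1$ if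 for all $w',w''\in E_n$ with $w\preceq w'$, $\mathrm{par}(w)\preceq w''$: $\|d(\hat p_n(\cdot|w'),\hat p_n(\cdot|w''))\|_{L,k}\le c\|\mathrm{conf}(w')\|_{L,r}+c\|\mathrm{conf}(w'')\|_{L,r}$, and $\mathsf{CanRmv}(w)=0$ otherwise. PruneTree: start with $\widehat T_n=E_n$, all nodes unexamined; while $\widehat T_n$ has an unexamined leaf $w$ ($w\ne e$), remove $w$ if $\mathsf{CanRmv}(w)=1$, and mark $w$ examined; output $\widehat T_n$. Condition AGCT: the setting holds with $0\le\mathrm{conf}_\ell(w)\le1$, $\mathrm{conf}_\ell(w)\le\mathrm{conf}_\ell(w')$ whenever $w\preceq w'$, and positive extended integers $k,r,m$ with either ($k\le m$, $r\ge km/(m-k)$) or $k\le r=m=\infty$. *)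

(* Defs.v *)
From HB Require Import structures.
From Stdlib Require Import Relations.
From mathcomp Require Import all_boot all_order all_algebra.
From mathcomp Require Import all_classical all_reals all_analysis.
Set Implicit Arguments. Unset Strict Implicit. Unset Printing Implicit Defensive.
Import Order.TTheory GRing.Theory Num.Theory.
Local Open Scope classical_set_scope.
Local Open Scope ring_scope.

(* A finite string w = w_{-k} ... w_{-1} is the seq [:: w_{-k}; ...; w_{-1}]
   (reading order).  A left-infinite sequence x = ... x_{-2} x_{-1} is a
   function x : nat -> A with x j = x_{-(j+1)}.                         *)
Section Strings.
Variable A : finType.

Inductive str := SFin of seq A | SInf of (nat -> A).

Definition pre (x : nat -> A) (k : nat) : seq A := rev (mkseq x k).

Definition par (w : seq A) : seq A := behead w.

Definition sfx (u v : str) : Prop :=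
  match u, v with
  | SFin w, SFin w' => suffix w w'
  | SFin w, SInf x => w = pre x (size w)
  | SInf x, SInf y => x = y
  | SInf _, SFin _ => False
  end.

Definition is_tree (T : set str) : Prop :=
  [/\ T (SFin [::]),
      (forall w, T (SFin w) -> w <> [::] -> T (SFin (par w))) &
      (forall x, T (SInf x) -> forall k, T (SFin (pre x k)))].

Definition is_leaf (T : set str) (u : str) : Prop :=
  T u /\ match u with
         | SFin w => forall a, ~ T (SFin (a :: w))
         | SInf _ => True
         end.

Definition complete (T : set str) : Prop :=
  forall w, T (SFin w) -> ~ is_leaf T (SFin w) ->
    #|[set a : A | `[< T (SFin (a :: w)) >] ]| = #|A|.

(* ctx_of T x u  <->  u = T(x) = x^{-1}_{-K_T(x)},
   K_T(x) = sup {k in N \cup {oo} : x^{-1}_{-k} \in T}, x^{-1}_{-oo} = x *)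
Definition ctx_of (T : set str) (x : nat -> A) (u : str) : Prop :=
  match u with
  | SFin w => exists k, [/\ w = pre x k, T (SFin (pre x k)),
                  (forall j, T (SFin (pre x j)) -> (j <= k)%N) & ~ T (SInf x)]
  | SInf y => y = x /\
      ((forall k, exists j, (k <= j)%N /\ T (SFin (pre x j))) \/ T (SInf x))
  end.

End Strings.

Arguments SFin {A}.
Arguments SInf {A}.

Inductive xnat := XN of nat | XInf.
Definition xpos (e : xnat) : Prop := if e is XN n then (0 < n)%N else True.
Definition xle (e f : xnat) : Prop :=
  match e, f with
  | _, XInf => True
  | XInf, XN _ => False
  | XN a, XN b => (a <= b)%N
  end.

Section ContextTrees.
Variables (R : realType) (A : finType) (L : nat).

(* p l x a = p_l(a | x) *)
Definition is_context_tree (p : 'I_L -> (nat -> A) -> A -> R) (T : set (str A)) :=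
  is_tree T /\
  forall x y u, ctx_of T x u -> ctx_of T y u -> forall l, p l x = p l y.

Definition is_complete_context_tree p T := is_context_tree p T /\ complete T.

Definition is_minimal_complete_context_tree p (T : set (str A)) :=
  is_complete_context_tree p T /\
  forall T', is_complete_context_tree p T' -> T' `<=` T -> T' = T.

End ContextTrees.

Section Model.
Variables (R : realType) (A : finType) (L : nat).
Variables (d0 : measure_display) (Omega : measurableType d0).
Variable (P : probability Omega R).

Definition is_dist (q : A -> R) : Prop :=
  (forall a, 0 <= q a) /\ \sum_(a : A) q a = 1.

Definition coord_sets (I : Type) : set (set (I -> A)) :=
  [set C | exists (i : I) (a : A), C = [set y | y i = a]].
Definition prod_measurable (I : Type) (B : set (I -> A)) : Prop :=
  <<s @coord_sets I >> B.

Definition past0 (Y : int -> Omega -> A) (w : Omega) : nat -> A :=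
  fun j => Y (- (j%:Z) - 1) w.

Definition process_model (X : 'I_L -> int -> Omega -> A)
    (p : 'I_L -> (nat -> A) -> A -> R) : Prop :=
  forall l : 'I_L,
  (forall (i : int) (a : A), measurable (X l i @^-1` [set a])) /\
  (* stationarity (shift invariance of the finite-dimensional laws) *)
  (forall (i : int) (s : seq A),
     P [set w | [seq X l (i + j%:Z) w | j <- iota 0 (size s)] = s] =
     P [set w | [seq X l (i + 1 + j%:Z) w | j <- iota 0 (size s)] = s]) /\
  (forall B : set (int -> A), prod_measurable B ->
     [set y | B (fun i => y (i + 1))] = B ->
     P [set w | B (fun i => X l i w)] = 0%E \/
     P [set w | B (fun i => X l i w)] = 1%E) /\
  (* p l is a (regular) version of the conditional law of X_0 given the past *)
  (forall x, is_dist (p l x)) /\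
  (forall a, measurable_fun setT (fun w => p l (past0 (X l) w) a)) /\
  (forall a (B : set (nat -> A)), prod_measurable B ->
     P ([set w | X l 0 w = a] `&` [set w | B (past0 (X l) w)]) =
     (\int[P]_(w in [set w | B (past0 (X l) w)]) (p l (past0 (X l) w) a)%:E)%E).

End Model.

(* Xs l : int -> A is the realized path of X(l).                        *)
Section Estimator.
Variables (R : realType) (A : finType) (L : nat).
Variable (Xs : 'I_L -> int -> A).
Variable (p : 'I_L -> (nat -> A) -> A -> R).

Definition block (Y : int -> A) (i : int) (k : nat) : seq A :=
  [seq Y (i - k%:Z + 1 + j%:Z) | j <- iota 0 k].

(* N_{j}(w): occurrences of w as a block of X_1^j (blocks ending at
   times i = |w|, ..., j; for w = e this gives j + 1) *)
Definition Ncount (Y : int -> A) (j : nat) (w : seq A) : nat :=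
  count (fun i : nat => block Y i%:Z (size w) == w) (iota (size w) (j.+1 - size w)).

Definition posN (n : nat) (w : seq A) : bool :=
  [forall l : 'I_L, (0 < Ncount (Xs l) n.-1 w)%N].

Definition phat (n : nat) (l : 'I_L) (w : seq A) : A -> R := fun a =>
  if posN n w then (Ncount (Xs l) n (rcons w a))%:R / (Ncount (Xs l) n.-1 w)%:R
  else #|A|%:R^-1.

Definition past (Y : int -> A) (i : nat) : nat -> A :=
  fun j => Y (i%:Z - 1 - j%:Z).

Definition pbar (n : nat) (l : 'I_L) (w : seq A) : A -> R := fun a =>
  if posN n w then
    (Ncount (Xs l) n.-1 w)%:R^-1 *
    \sum_((size w).+1 <= i < n.+1)
       (if block (Xs l) (i%:Z - 1) (size w) == w then p l (past (Xs l) i) a else 0)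
  else #|A|%:R^-1.

Definition xinv (e : xnat) : R := if e is XN n then n%:R^-1 else 0.

Definition lnorm (q : xnat) (v : 'I_L -> R) : R :=
  match q with
  | XN n => ((L%:R)^-1 * \sum_(l < L) `|v l| ^+ n) `^ (n%:R^-1)
  | XInf => \big[Num.max/0]_(l < L) `|v l|
  end.

Definition AGCT (d : 'I_L -> (A -> R) -> (A -> R) -> R)
    (conf : str A -> 'I_L -> R) (k r m : xnat) : Prop :=
  [/\ (forall l q q', is_dist q -> is_dist q' -> 0 <= d l q q' <= 1),
      (forall l q q', is_dist q -> is_dist q' -> (d l q q' = 0 <-> q = q')),
      (forall l q q', is_dist q -> is_dist q' -> d l q q' = d l q' q) &
      (forall l q q' q'', is_dist q -> is_dist q' -> is_dist q'' ->
          d l q q'' <= d l q q' + d l q' q'')] /\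
  ((forall w l, 0 <= conf w l <= 1) /\
   (forall w w' l, sfx w w' -> conf w l <= conf w' l)) /\
  (* exponents; r >= km/(m-k) is read as 1/r <= 1/k - 1/m, 1/oo = 0 *)
  [/\ xpos k, xpos r, xpos m &
      ((xle k m /\ xinv r <= xinv k - xinv m) \/
       (xle k r /\ r = XInf /\ m = XInf))].

(* the event Good_m (ratio d/conf read as 0 when d = 0, and as +oo when
   conf = 0 < d) *)
Definition Good (d : 'I_L -> (A -> R) -> (A -> R) -> R)
    (conf : str A -> 'I_L -> R) (n : nat) (m : xnat) : Prop :=
  forall w : seq A, posN n w ->
    (forall l, conf (SFin w) l = 0 -> d l (pbar n l w) (phat n l w) = 0) /\
    lnorm m (fun l => d l (pbar n l w) (phat n l w) / conf (SFin w) l) <= 1.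

Definition En (n : nat) : set (seq A) := [set w | posN n w].

Definition CanRmv (d : 'I_L -> (A -> R) -> (A -> R) -> R)
    (conf : str A -> 'I_L -> R) (c : R) (k r : xnat) (n : nat) (w : seq A) : Prop :=
  forall w' w'', En n w' -> En n w'' -> suffix w w' -> suffix (par w) w'' ->
    lnorm k (fun l => d l (phat n l w') (phat n l w'')) <=
    c * lnorm r (conf (SFin w')) + c * lnorm r (conf (SFin w'')).

(* PruneTree: states are (current tree, examined nodes) *)
Inductive prune_step (CR : seq A -> Prop) :
    set (seq A) * set (seq A) -> set (seq A) * set (seq A) -> Prop :=
| prune_remove (T M : set (seq A)) (w : seq A) :
    T w -> w <> [::] -> ~ M w -> (forall a, ~ T (a :: w)) -> CR w ->
    prune_step CR (T, M) (T `\ w, M `|` [set w])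
| prune_keep (T M : set (seq A)) (w : seq A) :
    T w -> w <> [::] -> ~ M w -> (forall a, ~ T (a :: w)) -> ~ CR w ->
    prune_step CR (T, M) (T, M `|` [set w]).

Definition prune_terminal (st : set (seq A) * set (seq A)) : Prop :=
  ~ exists w, [/\ st.1 w, w <> [::], ~ st.2 w & forall a, ~ st.1 (a :: w)].

Definition PruneTree_output d conf c k r n (Th : set (seq A)) : Prop :=
  exists M, clos_refl_trans _ (prune_step (CanRmv d conf c k r n)) (En n, set0) (Th, M)
            /\ prune_terminal (Th, M).

End Estimator.

(* Main.v *)
Require Import Defs.
From HB Require Import structures.
From Stdlib Require Import Relations.
From mathcomp Require Import all_boot all_order all_algebra.
From mathcomp Require Import all_classical all_reals all_analysis.
From mathcomp Require Import ring lra zify.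
Set Implicit Arguments. Unset Strict Implicit. Unset Printing Implicit Defensive.
Import Order.TTheory GRing.Theory Num.Theory.
Local Open Scope ring_scope.

Section PM.
Variables (R : realType) (L : nat).
Hypothesis L0 : (0 < L)%N.
Implicit Types (u v w : 'I_L -> R).

Definition Ev v : R := L%:R^-1 * \sum_(l < L) v l.
Definition PM (q : R) v : R := (Ev (fun l => v l `^ q)) `^ q^-1.
Definition MX v : R := \big[Num.max/0]_(l < L) v l.

Lemma Linv_gt0 : 0 < L%:R^-1 :> R.
Proof. by rewrite invr_gt0 ltr0n. Qed.

Lemma Ev_ge0 v : (forall l, 0 <= v l) -> 0 <= Ev v.
Proof. by move=> h; rewrite mulr_ge0 ?(ltW Linv_gt0) ?sumr_ge0. Qed.

Lemma Ev_le v w : (forall l, v l <= w l) -> Ev v <= Ev w.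
Proof. by move=> h; rewrite ler_wpM2l ?(ltW Linv_gt0) ?ler_sum. Qed.

Lemma EvD v w : Ev (fun l => v l + w l) = Ev v + Ev w.
Proof. by rewrite /Ev big_split mulrDr. Qed.

Lemma EvZ a v : Ev (fun l => a * v l) = a * Ev v.
Proof. by rewrite /Ev -mulr_sumr mulrCA. Qed.

Lemma Ev_cst a : Ev (fun=> a) = a.
Proof.
rewrite /Ev sumr_const card_ord -[a *+ L]mulr_natl mulKf //.
by rewrite pnatr_eq0 -lt0n.
Qed.

Lemma Ev_eq0 v : (forall l, 0 <= v l) -> Ev v = 0 -> forall l, v l = 0.
Proof.
move=> h /eqP; rewrite mulf_eq0 invr_eq0 pnatr_eq0 (gtn_eqF L0) /= => /eqP s0 l.
by apply: (psumr_eq0P (P := predT) _ s0).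
Qed.

Lemma powRK (x q : R) : 0 <= x -> q != 0 -> (x `^ q) `^ q^-1 = x.
Proof. by move=> x0 q0; rewrite -powRrM mulfV // powRr1. Qed.

Lemma powRVK (x q : R) : 0 <= x -> q != 0 -> (x `^ q^-1) `^ q = x.
Proof. by move=> x0 q0; rewrite -powRrM mulVf // powRr1. Qed.

Lemma PM_ge0 q v : 0 <= PM q v.
Proof. exact: powR_ge0. Qed.

Lemma PM_pow q v : q != 0 -> (PM q v) `^ q = Ev (fun l => v l `^ q).
Proof. by move=> q0; rewrite /PM powRVK // Ev_ge0 // => l; exact: powR_ge0. Qed.

Lemma powR_div (x y p : R) : 0 <= x -> 0 < y -> (x / y) `^ p = x `^ p / y `^ p.
Proof.
move=> x0 y0; rewrite powRM ?invr_ge0 ?(ltW y0) //; congr (_ * _).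
have h : (y * y^-1) `^ p = 1 by rewrite mulfV ?gt_eqF // powR1.
rewrite powRM ?invr_ge0 ?(ltW y0) // in h.
have yp : y `^ p != 0 by rewrite gt_eqF // powR_gt0.
by apply: (mulfI yp); rewrite h mulfV.
Qed.

Lemma hoelder_fin (P Q : R) u v : 0 < P -> 0 < Q -> P^-1 + Q^-1 = 1 ->
  (forall l, 0 <= u l) -> (forall l, 0 <= v l) ->
  Ev (fun l => u l * v l) <= PM P u * PM Q v.
Proof.
move=> P0 Q0 PQ u0 v0.
have [A0|Apos] := eqVneq (PM P u) 0.
  have : Ev (fun l => u l `^ P) = 0 by rewrite -PM_pow ?gt_eqF // A0 powR0 ?gt_eqF.
  move/Ev_eq0 => /(_ (fun l => powR_ge0 _ _)) h.
  rewrite A0 mul0r le_eqVlt; apply/orP; left; apply/eqP.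
  rewrite -(Ev_cst 0); congr Ev; apply/funext => l.
  by rewrite (powR_eq0_eq0 (h l)) mul0r.
have [B0|Bpos] := eqVneq (PM Q v) 0.
  have : Ev (fun l => v l `^ Q) = 0 by rewrite -PM_pow ?gt_eqF // B0 powR0 ?gt_eqF.
  move/Ev_eq0 => /(_ (fun l => powR_ge0 _ _)) h.
  rewrite B0 mulr0 le_eqVlt; apply/orP; left; apply/eqP.
  rewrite -(Ev_cst 0); congr Ev; apply/funext => l.
  by rewrite (powR_eq0_eq0 (h l)) mulr0.
have A0 : 0 < PM P u by rewrite lt_neqAle eq_sym Apos PM_ge0.
have B0 : 0 < PM Q v by rewrite lt_neqAle eq_sym Bpos PM_ge0.
have eA := @PM_pow P u (lt0r_neq0 P0).
have eB := @PM_pow Q v (lt0r_neq0 Q0).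
move: Apos Bpos A0 B0 eA eB.
generalize (PM P u) (PM Q v) => A B Apos Bpos A0 B0 eA eB.
have key : Ev (fun l => (u l / A) * (v l / B)) <= 1.
  have h1 : Ev (fun l => u l / A * (v l / B)) <=
            Ev (fun l => (u l / A) `^ P / P + (v l / B) `^ Q / Q).
    apply: Ev_le => l.
    have ha : 0 <= u l / A by apply: divr_ge0; [exact: u0 | exact: ltW].
    have hb : 0 <= v l / B by apply: divr_ge0; [exact: v0 | exact: ltW].
    exact: (conjugate_powR ha hb P0 Q0 PQ).
  apply: (le_trans h1).
  rewrite EvD.
  have AP : A `^ P != 0 by rewrite gt_eqF // powR_gt0.
  have BQ : B `^ Q != 0 by rewrite gt_eqF // powR_gt0.
  have -> : Ev (fun l => (u l / A) `^ P / P) = P^-1.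
    have -> : (fun l => (u l / A) `^ P / P) = (fun l => (P^-1 * (A `^ P)^-1) * u l `^ P).
      apply/funext => l; rewrite powR_div; [|exact: u0|exact: A0].
      by rewrite [RHS]mulrC -mulrA [X in _ * X = _]mulrC.
    rewrite (EvZ _ (fun l => u l `^ P)) -eA.
    by rewrite -mulrA mulVf // mulr1.
  have -> : Ev (fun l => (v l / B) `^ Q / Q) = Q^-1.
    have -> : (fun l => (v l / B) `^ Q / Q) = (fun l => (Q^-1 * (B `^ Q)^-1) * v l `^ Q).
      apply/funext => l; rewrite powR_div; [|exact: v0|exact: B0].
      by rewrite [RHS]mulrC -mulrA [X in _ * X = _]mulrC.
    rewrite (EvZ _ (fun l => v l `^ Q)) -eB.
    by rewrite -mulrA mulVf // mulr1.
  by rewrite PQ.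
have -> : Ev (fun l => u l * v l) = (A * B) * Ev (fun l => (u l / A) * (v l / B)).
  rewrite -(EvZ (A * B) (fun l => (u l / A) * (v l / B))); congr Ev; apply/funext => l.
  have Ane : A != 0 by rewrite gt_eqF.
  have Bne : B != 0 by rewrite gt_eqF.
  by field; rewrite Ane Bne.
have AB0 : 0 <= A * B by apply: mulr_ge0; exact: ltW.
by have := ler_wpM2l AB0 key; rewrite mulr1.
Qed.


Lemma PM_mono (q : R) u v : 0 < q -> (forall l, 0 <= u l <= v l) -> PM q u <= PM q v.
Proof.
move=> q0 h; rewrite /PM; apply: ge0_ler_powR.
- by rewrite invr_ge0 ltW.
- by rewrite nnegrE; apply: Ev_ge0 => l; exact: powR_ge0.
- by rewrite nnegrE; apply: Ev_ge0 => l; exact: powR_ge0.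
apply: Ev_le => l; have /andP[h1 h2] := h l.
apply: (ge0_ler_powR (ltW q0)) => //; rewrite nnegrE //.
exact: (le_trans h1 h2).
Qed.

Lemma PM_cst (q a : R) : q != 0 -> 0 <= a -> PM q (fun=> a) = a.
Proof. by move=> q0 a0; rewrite /PM Ev_cst powRK. Qed.

Lemma PM_le_cst (q a : R) v : 0 < q -> 0 <= a -> (forall l, 0 <= v l <= a) -> PM q v <= a.
Proof.
move=> q0 a0 h; have e := @PM_cst q a (lt0r_neq0 q0) a0.
have := @PM_mono q v (fun=> a) q0 h; by rewrite e.
Qed.

Lemma PM_scale (q a : R) v : 0 < q -> 0 <= a -> (forall l, 0 <= v l) ->
  PM q (fun l => a * v l) = a * PM q v.
Proof.
move=> q0 a0 v0; rewrite /PM.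
have -> : (fun l => (a * v l) `^ q) = (fun l => a `^ q * v l `^ q).
  by apply/funext => l; rewrite powRM.
rewrite (EvZ _ (fun l => v l `^ q)) powRM ?powRK ?lt0r_neq0 //.
  exact: powR_ge0.
by apply: Ev_ge0 => l; exact: powR_ge0.
Qed.

Lemma PM_powR (e f : R) v : 0 < e -> 0 < f -> (forall l, 0 <= v l) ->
  PM (f / e) (fun l => v l `^ e) = (Ev (fun l => v l `^ f)) `^ (e / f).
Proof.
move=> e0 f0 v0; rewrite /PM.
have -> : (fun l => (v l `^ e) `^ (f / e)) = (fun l => v l `^ f).
  apply/funext => l; rewrite -powRrM; congr (_ `^ _).
  by rewrite mulrC mulfVK // lt0r_neq0.
by rewrite invf_div.
Qed.

Lemma PM_expmono (s t : R) v : 0 < s -> s <= t -> (forall l, 0 <= v l) ->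
  PM s v <= PM t v.
Proof.
move=> s0 st v0.
have [->|sneq] := eqVneq s t; first by [].
have s_lt_t : s < t by rewrite lt_neqAle sneq.
have t0 : 0 < t by exact: lt_trans s0 s_lt_t.
have ts0 : 0 < t - s by rewrite subr_gt0.
have P0 : 0 < t / s by rewrite divr_gt0.
have Q0 : 0 < t / (t - s) by rewrite divr_gt0.
have PQ : (t / s)^-1 + (t / (t - s))^-1 = 1.
  rewrite !invf_div; field.
  by rewrite lt0r_neq0.
have H := @hoelder_fin (t / s) (t / (t - s)) (fun l => v l `^ s) (fun=> 1)
   P0 Q0 PQ (fun l => powR_ge0 _ _) (fun l => ler01).
rewrite PM_powR // PM_cst ?lt0r_neq0 // mulr1 in H.
have e1 : (fun l => v l `^ s * 1) = (fun l => v l `^ s).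
  by apply/funext => l; rewrite mulr1.
rewrite e1 in H.
rewrite /PM.
have E0 : 0 <= Ev (fun l => v l `^ t) by apply: Ev_ge0 => l; exact: powR_ge0.
apply: (@le_trans _ _ ((Ev (fun l => v l `^ t) `^ (s / t)) `^ s^-1)).
  apply: ge0_ler_powR => //.
  - by rewrite invr_ge0 ltW.
  - by rewrite nnegrE; apply: Ev_ge0 => l; exact: powR_ge0.
  - by rewrite nnegrE; exact: powR_ge0.
rewrite -powRrM.
have -> : s / t * s^-1 = t^-1 by field; rewrite !lt0r_neq0.
by [].
Qed.

Lemma PM_gen_hoelder (a b s : R) u c : 0 < a -> a < b -> 0 < s ->
  s^-1 = a^-1 - b^-1 -> (forall l, 0 <= u l) -> (forall l, 0 <= c l) ->
  PM a (fun l => u l * c l) <= PM b u * PM s c.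
Proof.
move=> a0 ab s0 hs u0 c0.
have b0 : 0 < b by exact: lt_trans a0 ab.
have P0 : 0 < b / a by rewrite divr_gt0.
have Q0 : 0 < s / a by rewrite divr_gt0.
have PQ : (b / a)^-1 + (s / a)^-1 = 1.
  rewrite !invf_div hs; field.
  by rewrite !lt0r_neq0.
have H := @hoelder_fin (b / a) (s / a) (fun l => u l `^ a) (fun l => c l `^ a)
   P0 Q0 PQ (fun l => powR_ge0 _ _) (fun l => powR_ge0 _ _).
rewrite !PM_powR // in H.
rewrite /PM.
have -> : (fun l => (u l * c l) `^ a) = (fun l => u l `^ a * c l `^ a).
  by apply/funext => l; rewrite powRM.
have X0 : 0 <= Ev (fun l => u l `^ b) by apply: Ev_ge0 => l; exact: powR_ge0.
have Y0 : 0 <= Ev (fun l => c l `^ s) by apply: Ev_ge0 => l; exact: powR_ge0.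
have h2 : Ev (fun l => u l `^ a * c l `^ a) `^ a^-1 <=
   (Ev (fun l => u l `^ b) `^ (a / b) * Ev (fun l => c l `^ s) `^ (a / s)) `^ a^-1.
  apply: ge0_ler_powR => //.
  - by rewrite invr_ge0 ltW.
  - by rewrite nnegrE; apply: Ev_ge0 => l; apply: mulr_ge0; exact: powR_ge0.
  - by rewrite nnegrE; apply: mulr_ge0; exact: powR_ge0.
apply: (le_trans h2).
rewrite powRM ?powR_ge0 // -!powRrM.
have -> : a / b * a^-1 = b^-1 by field; rewrite !lt0r_neq0.
have -> : a / s * a^-1 = s^-1 by field; rewrite !lt0r_neq0.
by [].
Qed.

Lemma PM1 v : (forall l, 0 <= v l) -> PM 1 v = Ev v.
Proof.
move=> v0; rewrite /PM invr1 powRr1; last by apply: Ev_ge0 => l; exact: powR_ge0.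
by congr Ev; apply/funext => l; rewrite powRr1.
Qed.

Lemma PM_minkowski (p : R) u v : 1 <= p -> (forall l, 0 <= u l) -> (forall l, 0 <= v l) ->
  PM p (fun l => u l + v l) <= PM p u + PM p v.
Proof.
move=> p1 u0 v0.
have w0 : forall l, 0 <= u l + v l by move=> l; rewrite addr_ge0.
have [<-|pneq] := eqVneq 1 p.
  by rewrite !PM1 // EvD.
have p_gt1 : 1 < p by rewrite lt_neqAle pneq.
have p0 : 0 < p by exact: lt_trans ltr01 p_gt1.
have e0 : 0 < p - 1 by rewrite subr_gt0.
have Q0 : 0 < p / (p - 1) by rewrite divr_gt0.
have PQ : p^-1 + (p / (p - 1))^-1 = 1.
  rewrite invf_div; field.
  by rewrite lt0r_neq0.
pose w := fun l => u l + v l.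
have w0' : forall l, 0 <= w l by exact: w0.
have Hu := @hoelder_fin p (p / (p - 1)) u (fun l => w l `^ (p - 1)) p0 Q0 PQ u0
   (fun l => powR_ge0 _ _).
have Hv := @hoelder_fin p (p / (p - 1)) v (fun l => w l `^ (p - 1)) p0 Q0 PQ v0
   (fun l => powR_ge0 _ _).
rewrite (@PM_powR (p - 1) p w e0 p0 w0') in Hu.
rewrite (@PM_powR (p - 1) p w e0 p0 w0') in Hv.
have eS : Ev (fun l => w l `^ p) =
   Ev (fun l => u l * w l `^ (p - 1)) + Ev (fun l => v l * w l `^ (p - 1)).
  rewrite -EvD; congr Ev; apply/funext => l.
  by rewrite -mulrDl mulr_powRB1.
have S0 : 0 <= Ev (fun l => w l `^ p) by apply: Ev_ge0 => l; exact: powR_ge0.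
have PMw : PM p (fun l => u l + v l) = Ev (fun l => w l `^ p) `^ p^-1 by [].
rewrite PMw.
move: Hu Hv eS S0; generalize (Ev (fun l => w l `^ p)) => S Hu Hv eS S0.
have HS : S <= (PM p u + PM p v) * S `^ ((p - 1) / p).
  by rewrite {1}eS mulrDl; exact: lerD Hu Hv.
have [Sz|Snz] := eqVneq S 0.
  by rewrite Sz powR0 ?invr_neq0 ?lt0r_neq0 // addr_ge0 // PM_ge0.
have Spos : 0 < S by rewrite lt_neqAle eq_sym Snz.
have Y0 : 0 < S `^ ((p - 1) / p) by rewrite powR_gt0.
have eS2 : S = S `^ p^-1 * S `^ ((p - 1) / p).
  rewrite -powRD; last by rewrite Snz implybT.
  have -> : p^-1 + (p - 1) / p = 1 by field; rewrite lt0r_neq0.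
  by rewrite powRr1.
rewrite {1}eS2 in HS.
by rewrite -(ler_pM2r Y0).
Qed.

Lemma MX_ge0 v : 0 <= MX v.
Proof.
rewrite /MX; elim/big_rec: _ => // i x _ hx.
by rewrite le_max hx orbT.
Qed.

Lemma le_MX v l : v l <= MX v.
Proof. exact: le_bigmax. Qed.

Lemma MX_le v (a : R) : 0 <= a -> (forall l, v l <= a) -> MX v <= a.
Proof. by move=> a0 h; apply: bigmax_le. Qed.

Lemma PM_le_MX (q : R) v : 0 < q -> (forall l, 0 <= v l) -> PM q v <= MX v.
Proof.
move=> q0 v0; apply: PM_le_cst => //; first exact: MX_ge0.
by move=> l; rewrite v0 le_MX.
Qed.


Lemma lnorm_fin (n : nat) v : (forall l, 0 <= v l) -> lnorm (XN n) v = PM n%:R v.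
Proof.
move=> v0; rewrite /lnorm /PM /Ev.
have -> : \sum_(l < L) `|v l| ^+ n = \sum_(l < L) v l `^ n%:R.
  by apply: eq_bigr => l _; rewrite ger0_norm // powR_mulrn.
by [].
Qed.

Lemma lnorm_inf v : (forall l, 0 <= v l) -> lnorm XInf v = MX v.
Proof. by move=> v0; rewrite /lnorm /MX; apply: eq_bigr => l _; rewrite ger0_norm. Qed.

Lemma lnorm_mono q v w : xpos q -> (forall l, 0 <= v l <= w l) -> lnorm q v <= lnorm q w.
Proof.
move=> hq h.
have v0 : forall l, 0 <= v l by move=> l; case/andP: (h l).
have w0 : forall l, 0 <= w l by move=> l; case/andP: (h l) => a b; exact: le_trans a b.
case: q hq => [n|] hq.
  by rewrite !lnorm_fin //; apply: PM_mono => //; rewrite ltr0n.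
rewrite !lnorm_inf //; apply: MX_le; first exact: MX_ge0.
by move=> l; case/andP: (h l) => _ b; exact: le_trans b (le_MX _ _).
Qed.

Lemma lnorm_add q v w : xpos q -> (forall l, 0 <= v l) -> (forall l, 0 <= w l) ->
  lnorm q (fun l => v l + w l) <= lnorm q v + lnorm q w.
Proof.
move=> hq v0 w0.
have vw0 : forall l, 0 <= v l + w l by move=> l; rewrite addr_ge0.
case: q hq => [n|] hq.
  rewrite !lnorm_fin //; apply: PM_minkowski => //.
  by rewrite ler1n.
rewrite !lnorm_inf //; apply: MX_le.
  by rewrite addr_ge0 // MX_ge0.
by move=> l; apply: lerD; exact: le_MX.
Qed.

Lemma lnorm_ge0 q v : 0 <= lnorm q v.
Proof.
case: q => [n|] /=; first exact: powR_ge0.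
elim/big_rec: _ => // i x _ hx.
by rewrite le_max hx orbT.
Qed.

Lemma xinv_XN_gt0 (n : nat) : (0 < n)%N -> 0 < xinv R (XN n).
Proof. by move=> n0; rewrite /= invr_gt0 ltr0n. Qed.

Lemma xinv_le0 r : xpos r -> xinv R r <= 0 -> r = XInf.
Proof.
case: r => [n|] //= n0 h.
by have := xinv_XN_gt0 n0; rewrite /= ltNge h.
Qed.

Lemma lnorm_exp k r v : xpos k -> xpos r -> xle k r -> (forall l, 0 <= v l) ->
  lnorm k v <= lnorm r v.
Proof.
case: k => [a|]; case: r => [b|] // a0 b0 ab v0.
- rewrite !lnorm_fin //; apply: PM_expmono => //.
    by rewrite ltr0n.
  by rewrite ler_nat.
- rewrite lnorm_fin // lnorm_inf //; apply: PM_le_MX => //.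
  by rewrite ltr0n.
Qed.

Lemma hold_lemma (k r m : xnat) (D cf : 'I_L -> R) :
  [/\ xpos k, xpos r, xpos m &
      ((xle k m /\ xinv R r <= xinv R k - xinv R m) \/
       (xle k r /\ r = XInf /\ m = XInf))] ->
  (forall l, 0 <= D l) -> (forall l, 0 <= cf l <= 1) ->
  (forall l, cf l = 0 -> D l = 0) ->
  lnorm m (fun l => D l / cf l) <= 1 ->
  lnorm k D <= lnorm r cf.
Proof.
move=> [hk hr hm hex] D0 cf01 cfD hG.
have cf0 : forall l, 0 <= cf l by move=> l; case/andP: (cf01 l).
pose u := fun l => D l / cf l.
have u0 : forall l, 0 <= u l by move=> l; apply: divr_ge0; [exact: D0 | exact: cf0].
have Du : forall l, D l = u l * cf l.
  move=> l; rewrite /u; have [c0|cfn] := eqVneq (cf l) 0.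
    by rewrite c0 mulr0 (cfD _ c0).
  by rewrite divfK.
case: m hm hex hG => [b|] hm hex hG; last first.
  have kr : xle k r.
    case: hex => [[_ h]|[h _]] //.
    rewrite subr0 in h.
    case: k hk h => [a|] ha h; last by rewrite (xinv_le0 hr h).
    case: r hr h => [c|] // hc h.
    rewrite /= -(ler_nat R) -lef_pV2 ?posrE ?ltr0n //; exact: h.
  rewrite lnorm_inf // in hG.
  have Dc : forall l, 0 <= D l <= cf l.
    move=> l; rewrite D0 /= Du.
    have ul1 : u l <= 1 by exact: le_trans (le_MX _ l) hG.
    by have := ler_wpM2r (cf0 l) ul1; rewrite mul1r.
  apply: (le_trans (lnorm_mono hk Dc)).
  exact: lnorm_exp.
case: hex => [[km h]|[_ [_ ]]] //.
case: k hk km h => [a|] // ha ab h.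
rewrite lnorm_fin // in hG.
rewrite lnorm_fin //.
have [eab|neab] := eqVneq a b.
  rewrite eab subrr in h.
  have rinf := xinv_le0 hr h; subst r.
  rewrite lnorm_inf //.
  have aq : 0 < a%:R :> R by rewrite ltr0n.
  have hD : forall l, 0 <= D l <= MX cf * u l.
    move=> l; rewrite D0 /= Du.
    rewrite [X in _ <= X]mulrC; apply: ler_wpM2l; [exact: u0 | exact: le_MX].
  apply: (le_trans (PM_mono aq hD)).
  rewrite (@PM_scale a%:R (MX cf) u aq (MX_ge0 cf) u0).
  rewrite -eab in hG.
  by have := ler_wpM2l (MX_ge0 cf) hG; rewrite mulr1.
have altb : (a < b)%N by rewrite ltn_neqAle neab.
pose s := (a%:R^-1 - b%:R^-1 : R)^-1.
have sinv0 : 0 < (a%:R^-1 - b%:R^-1 : R).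
  by rewrite subr_gt0 ltf_pV2 ?posrE ?ltr0n ?ltr_nat // (leq_trans ha ab).
have s0 : 0 < s by rewrite invr_gt0.
have hs : s^-1 = a%:R^-1 - b%:R^-1 by rewrite invrK.
have eD : D = (fun l => u l * cf l) by apply/funext => l; exact: Du.
rewrite eD.
have GH := @PM_gen_hoelder a%:R b%:R s u cf _ _ s0 hs u0 cf0.
apply: (le_trans (GH _ _)); first by rewrite ltr0n.
  by rewrite ltr_nat.
have Ps : PM s cf <= lnorm r cf.
  case: r hr h => [c|] hc h; last by rewrite lnorm_inf //; exact: PM_le_MX.
  rewrite lnorm_fin //; apply: PM_expmono => //.
  by rewrite -lef_pV2 ?posrE ?ltr0n // hs.
have := ler_wpM2r (PM_ge0 s cf) hG; rewrite mul1r => h2.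
exact: le_trans h2 Ps.
Qed.
End PM.

Section Comb.
Variable A : finType.
Implicit Types (x y : nat -> A) (Y : int -> A) (w v : seq A).

Lemma pre_S x k : pre x k.+1 = x k :: pre x k.
Proof. by rewrite /pre mkseqS rev_rcons. Qed.

Lemma size_pre x k : size (pre x k) = k.
Proof. by rewrite /pre size_rev size_mkseq. Qed.

Lemma par_pre x k : par (pre x k.+1) = pre x k.
Proof. by rewrite pre_S. Qed.

Lemma pre_drop x j K : (j <= K)%N -> pre x j = drop (K - j) (pre x K).
Proof.
elim: K => [|K IH] hj.
  by move: hj; rewrite leqn0 => /eqP ->; rewrite drop0.
rewrite leq_eqVlt in hj; case/orP: hj => [/eqP ->|hj]; first by rewrite subnn drop0.
rewrite pre_S subSn // drop_cons /=.
by apply: IH.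
Qed.

Lemma block_S Y (t : int) k : block Y t k.+1 = Y (t - k%:Z) :: block Y t k.
Proof.
rewrite /block /= (iotaDl 1 0) -map_comp; congr (_ :: _).
  congr Y; lia.
apply: eq_map => j /=; congr Y; lia.
Qed.


Lemma pre_past Y (i : nat) k : pre (past Y i) k = block Y (i%:Z - 1) k.
Proof.
elim: k => [|k IH]; first by rewrite /pre /block.
rewrite pre_S block_S IH /past; congr (Y _ :: _); lia.
Qed.

Lemma block_rcons Y (t : int) k : block Y (t + 1) k.+1 = rcons (block Y t k) (Y (t + 1)).
Proof.
rewrite /block -addn1 iotaD add0n map_cat /= cats1; congr rcons.
  apply: eq_map => j /=; congr Y; lia.
congr Y; lia.
Qed.

Lemma Ncount_size Y j w : (0 < Ncount Y j w)%N -> (size w <= j)%N.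
Proof.
move=> h; have := count_size (fun i : nat => block Y i%:Z (size w) == w)
  (iota (size w) (j.+1 - size w)).
rewrite size_iota -/(Ncount Y j w) => h2.
have := leq_trans h h2; lia.
Qed.

Lemma sum_count_split (R : realType) (s : seq nat) (P : pred nat) (f : nat -> A) :
  \sum_(a : A) (count (fun i => P i && (f i == a)) s)%:R = (count P s)%:R :> R.
Proof.
elim: s => [|i s IH] /=.
  by rewrite big1.
rewrite (eq_bigr (fun a => ((P i && (f i == a)) : nat)%:R + (count (fun i0 => P i0 && (f i0 == a)) s)%:R)); last first.
  by move=> a _; rewrite natrD.
rewrite big_split /= IH natrD; congr (_ + _).
case: (P i) => /=; last by rewrite big1.
rewrite (bigD1 (f i)) //= eqxx big1 ?addr0 // => a /negbTE.
by rewrite eq_sym => ->.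
Qed.

Lemma Ncount_rcons_sum (R : realType) Y n w : (0 < n)%N ->
  \sum_(a : A) (Ncount Y n (rcons w a))%:R = (Ncount Y n.-1 w)%:R :> R.
Proof.
move=> n0.
have -> : Ncount Y n.-1 w =
   count (fun i : nat => block Y i%:Z (size w) == w) (iota (size w) (n - size w)).
  by rewrite /Ncount prednK.
rewrite -(sum_count_split R _ _ (fun i : nat => Y (i%:Z + 1))).
apply: eq_bigr => a _; congr (_%:R).
rewrite /Ncount size_rcons subSS -add1n iotaDl count_map.
apply: eq_count => i /=.
have -> : ((1 + i)%N%:Z) = i%:Z + 1 by lia.
by rewrite block_rcons eqseq_rcons.
Qed.

Lemma sum_if_count (R : realType) (s : seq nat) (P : pred nat) (c : R) :
  \sum_(i <- s) (if P i then c else 0) = (count P s)%:R * c.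
Proof.
elim: s => [|i s IH]; first by rewrite big_nil mul0r.
rewrite big_cons IH /= natrD mulrDl; congr (_ + _).
by case: (P i); rewrite ?mul1r ?mul0r.
Qed.

Lemma pbar_sum (R : realType) Y n v (c : R) : (0 < n)%N ->
  \sum_((size v).+1 <= i < n.+1) (if block Y (i%:Z - 1) (size v) == v then c else 0)
  = (Ncount Y n.-1 v)%:R * c.
Proof.
move=> n0; rewrite /index_iota subSS -add1n iotaDl big_map.
have -> : Ncount Y n.-1 v =
   count (fun i : nat => block Y i%:Z (size v) == v) (iota (size v) (n - size v)).
  by rewrite /Ncount prednK.
rewrite -sum_if_count; apply: eq_bigr => i _.
have -> : ((1 + i)%N%:Z - 1) = i%:Z by lia.
by [].
Qed.
End Comb.

Section Tree.
Variables (A : finType) (T : set (str A)).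
Hypothesis Ttree : is_tree T.

Lemma tree_nil : T (SFin [::]).
Proof. by case: Ttree. Qed.

Lemma tree_pre_down x j k : (k <= j)%N -> T (SFin (pre x j)) -> T (SFin (pre x k)).
Proof.
case: Ttree => _ hpar _.
elim: j => [|j IH] hk hj.
  by move: hk; rewrite leqn0 => /eqP ->.
rewrite leq_eqVlt in hk; case/orP: hk => [/eqP -> //|hk].
apply: IH => //.
have := hpar _ hj; rewrite par_pre; apply.
by rewrite pre_S.
Qed.

Hypothesis Tcomp : complete T.

Lemma nochild w : w <> [::] -> ~ T (SFin w) -> forall a, ~ T (SFin (a :: par w)).
Proof.
case: Ttree => _ hpar _.
case: w => [//|b pw] _ nw a ha /=.
have hp : T (SFin pw) by exact: (hpar (a :: pw) ha).
have nl : ~ is_leaf T (SFin pw) by move=> [_ hl]; exact: (hl a ha).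
have hcard := Tcomp hp nl.
have := subset_cardP hcard (subset_predT _) => /(_ b).
move=> h; have hb : b \in in_set [set a0 | `[< T (SFin (a0 :: pw)) >]] by rewrite h. move: hb. rewrite inE. by move=> /asboolP.
Qed.

End Tree.

Lemma max_exists (P : nat -> Prop) K : P 0%N ->
  exists k, [/\ (k <= K)%N, P k & forall j, (j <= K)%N -> P j -> (j <= k)%N].
Proof.
move=> P0; elim: K => [|K [k [kK Pk hk]]].
  by exists 0%N; split => // j; rewrite leqn0 => /eqP ->.
case: (pselect (P K.+1)) => h.
  by exists K.+1; split.
exists k; split => //; first by rewrite (leq_trans kK).
move=> j jK Pj; apply: hk => //.
rewrite leq_eqVlt in jK; case/orP: jK => [/eqP ej|//].
by rewrite ej in Pj.
Qed.

Lemma ctx_same (A : finType) (T : set (str A)) (R : realType) L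
    (p : 'I_L -> (nat -> A) -> A -> R) w x y :
  is_context_tree p T -> complete T -> w <> [::] -> ~ T (SFin w) ->
  pre x (size w).-1 = par w -> pre y (size w).-1 = par w -> forall l, p l x = p l y.
Proof.
move=> [Ttree Hctx] Tcomp wn nTw hx hy.
have [_ _ hinf] := Ttree.
set K := (size w).-1 in hx hy.
have bound z : pre z K = par w -> forall j, T (SFin (pre z j)) -> (j <= K)%N.
  move=> hz j hj; rewrite leqNgt; apply/negP => hlt.
  have := tree_pre_down Ttree hlt hj; rewrite pre_S hz.
  exact: (nochild Ttree Tcomp wn nTw).
have noinf z : pre z K = par w -> ~ T (SInf z).
  move=> hz hi; have := hinf z hi K.+1; rewrite pre_S hz.
  exact: (nochild Ttree Tcomp wn nTw).
have [k [kK Pk hk]] := @max_exists (fun j => T (SFin (pre x j))) K (tree_nil Ttree).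
have exy j : (j <= K)%N -> pre y j = pre x j.
  by move=> jK; rewrite (pre_drop y jK) (pre_drop x jK) hx hy.
have cx : ctx_of T x (SFin (pre x k)).
  exists k; split => //; last exact: noinf.
  by move=> j hj; apply: hk (bound x hx j hj) hj.
have cy : ctx_of T y (SFin (pre x k)).
  exists k; split; first by rewrite exy.
  - by rewrite exy.
  - move=> j hj; have jK := bound y hy j hj.
    by rewrite exy // in hj; exact: hk.
  exact: noinf.
exact: (Hctx x y _ cx cy).
Qed.


Section Dist.
Variables (R : realType) (A : finType) (L : nat).
Variable (Xs : 'I_L -> int -> A).
Variable (p : 'I_L -> (nat -> A) -> A -> R).

Lemma posN_l n w (l : 'I_L) : posN Xs n w -> (0 < Ncount (Xs l) n.-1 w)%N.
Proof. by move/forallP/(_ l). Qed.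

Lemma phat_dist n l w : (0 < n)%N -> posN Xs n w -> is_dist (phat R Xs n l w).
Proof.
move=> n0 hp; have hN := posN_l l hp.
have hN' : (Ncount (Xs l) n.-1 w)%:R != 0 :> R by rewrite pnatr_eq0 -lt0n.
split.
  by move=> a; rewrite /phat hp divr_ge0.
rewrite /phat hp -mulr_suml Ncount_rcons_sum //.
by rewrite mulfV.
Qed.

Lemma pbar_eq n l v (q : A -> R) : (0 < n)%N -> posN Xs n v ->
  (forall i : nat, block (Xs l) (i%:Z - 1) (size v) = v -> p l (past (Xs l) i) = q) ->
  pbar Xs p n l v = q.
Proof.
move=> n0 hp H; have hN := posN_l l hp.
have hN' : (Ncount (Xs l) n.-1 v)%:R != 0 :> R by rewrite pnatr_eq0 -lt0n.
apply/funext => a; rewrite /pbar hp.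
rewrite (eq_bigr (fun i => if block (Xs l) (i%:Z - 1) (size v) == v then q a else 0)).
  by rewrite pbar_sum // mulrA mulVf // mul1r.
move=> i _; case: eqP => // h.
by rewrite (H i h).
Qed.

End Dist.

Local Open Scope classical_set_scope.

Theorem theorem3p2 (R : realType) (A : finType) (L : nat)
    (d0 : measure_display) (Omega : measurableType d0) (P : probability Omega R)
    (X : 'I_L -> int -> Omega -> A) (p : 'I_L -> (nat -> A) -> A -> R)
    (Tstar : set (str A))
    (d : 'I_L -> (A -> R) -> (A -> R) -> R) (conf : str A -> 'I_L -> R)
    (c : R) (k r m : xnat) (n : nat) (omega : Omega) (That : set (seq A)) :
  (0 < L)%N ->
  process_model P X p ->
  is_minimal_complete_context_tree p Tstar ->
  1 < c ->
  AGCT d conf k r m ->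
  Good (fun l i => X l i omega) p d conf n m ->
  PruneTree_output (fun l i => X l i omega) d conf c k r n That ->
  SFin @` That `<=` Tstar.
Proof.
move=> L0 hpm [[hctx hcomp] _] c1 [[drange deq dsym dtri] [[conf01 confmono] expo]] hGood hprune.
set Xs := fun l i => X l i omega in hGood hprune.
have l0 : 'I_L := Ordinal L0.
have [Ttree _] := hctx.
have TnilS : Tstar (SFin [::]) := tree_nil Ttree.
have sizeE v : En Xs n v -> (size v <= n.-1)%N.
  by move=> hv; apply: (@Ncount_size _ (Xs l0)); exact: posN_l.
have pdist : forall l x, is_dist (p l x).
  by move=> l x; have [_ [_ [_ [h _]]]] := hpm l; exact: h.
have KEY : forall w, En Xs n w -> w <> [::] -> ~ Tstar (SFin w) ->
    CanRmv Xs d conf c k r n w.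
  move=> w Ew wn nTw w' w'' Ew' Ew'' sw' sw''.
  have n0 : (0 < n)%N.
    have := sizeE _ Ew; case: w wn {Ew nTw sw' sw''} => // ? ? _ /=; lia.
  case: w wn Ew nTw sw' sw'' => [//|b pw] _ Ew nTw sw' sw''.
  rewrite /= in sw''.
  have spw : suffix pw w' := suffix_trans (suffix_cons pw b) sw'.
  pose x0 := fun j => nth b (rev pw) j.
  have hx0 : pre x0 (size (b :: pw)).-1 = par (b :: pw).
    by rewrite /= /pre /x0 -(size_rev pw) mkseq_nth revK.
  have pbq : forall v l, suffix pw v -> En Xs n v -> pbar Xs p n l v = p l x0.
    move=> v l sv Ev; apply: pbar_eq => // i hb.
    have hpre : pre (past (Xs l) i) (size v) = v by rewrite pre_past.
    apply: (ctx_same hctx hcomp (w := b :: pw)) => //.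
    have spv := size_suffix sv.
    rewrite /= (pre_drop _ spv) hpre.
    by move: sv; rewrite suffixE => /eqP.
  pose D1 := fun l => d l (pbar Xs p n l w') (phat R Xs n l w').
  pose D2 := fun l => d l (pbar Xs p n l w'') (phat R Xs n l w'').
  have dph v l : En Xs n v -> is_dist (phat R Xs n l v) by move=> hv; exact: phat_dist.
  have dpb v l : suffix pw v -> En Xs n v -> is_dist (pbar Xs p n l v).
    by move=> sv hv; rewrite pbq.
  have hpt : forall l, 0 <= d l (phat R Xs n l w') (phat R Xs n l w'') <= D1 l + D2 l.
    move=> l; have /andP[h0 _] := drange l _ _ (dph w' l Ew') (dph w'' l Ew'').
    rewrite h0 /= /D1 /D2 !pbq //.
    rewrite (dsym l (p l x0) (phat R Xs n l w') (pdist l x0) (dph w' l Ew')).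
    exact: dtri (dph w' l Ew') (pdist l x0) (dph w'' l Ew'').
  have D10 : forall l, 0 <= D1 l.
    by move=> l; have /andP[] := drange l _ _ (dpb w' l spw Ew') (dph w' l Ew').
  have D20 : forall l, 0 <= D2 l.
    by move=> l; have /andP[] := drange l _ _ (dpb w'' l sw'' Ew'') (dph w'' l Ew'').
  have xk : xpos k by case: expo.
  have H1 : lnorm k D1 <= lnorm r (conf (SFin w')).
    have [G1 G2] := hGood w' Ew'.
    by apply: (hold_lemma L0 expo D10 (conf01 _) G1 G2).
  have H2 : lnorm k D2 <= lnorm r (conf (SFin w'')).
    have [G1 G2] := hGood w'' Ew''.
    by apply: (hold_lemma L0 expo D20 (conf01 _) G1 G2).
  apply: (le_trans (lnorm_mono L0 xk hpt)).
  apply: (le_trans (lnorm_add L0 xk D10 D20)).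
  have c0 : 0 <= c by apply: ltW; exact: lt_trans ltr01 c1.
  have cx : forall y : R, 0 <= y -> y <= c * y.
    by move=> y y0; rewrite -{1}(mul1r y) ler_wpM2r // ltW.
  apply: lerD.
    exact: le_trans H1 (cx _ (lnorm_ge0 _ _)).
  exact: le_trans H2 (cx _ (lnorm_ge0 _ _)).
pose CR := CanRmv Xs d conf c k r n.
pose Inv := fun st : set (seq A) * set (seq A) =>
  st.1 `<=` En Xs n /\ (forall w, st.2 w -> ~ Tstar (SFin w) -> ~ st.1 w).
have stepI : forall st1 st2, prune_step CR st1 st2 -> Inv st1 -> Inv st2.
  move=> st1 st2 []; clear st1 st2.
  - move=> T M w0 Tw0 w0n nM w0leaf hcr [hE hI]; split => /=.
      by move=> v [hv _]; exact: hE.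
    move=> w [hM|->] hT; last by move=> [_ ]; apply.
    by move=> [hw _]; exact: (hI w hM hT).
  - move=> T M w0 Tw0 w0n nM w0leaf hcr [hE hI]; split => //=.
    move=> w [hM|->] hT; first exact: hI.
    by move=> _; apply: hcr; apply: KEY => //; exact: hE.
have crtI : forall st1 st2, clos_refl_trans _ (prune_step CR) st1 st2 -> Inv st1 -> Inv st2.
  move=> st1 st2; elim.
  - move=> x y h; exact: stepI h.
  - done.
  - move=> x y z _ h1 _ h2 i; exact: h2 (h1 i).
case: hprune => M [hcrt hterm].
have [hE hI] : Inv (That, M).
  apply: (crtI _ _ hcrt); split => //.
have [_ hpar _] := Ttree.
have core : forall w, That w -> ~ Tstar (SFin w) -> (forall a, ~ That (a :: w)) -> False.
  move=> w Tw nTw hch.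
  have wn : w <> [::] by move=> e; apply: nTw; rewrite e.
  case: (pselect (M w)) => hM; first exact: (hI w hM nTw Tw).
  by apply: hterm; exists w; split.
have main : forall j w, (n - size w <= j)%N -> That w -> ~ Tstar (SFin w) -> False.
  elim=> [|j IH] w hj Tw nTw; apply: (core w Tw nTw) => a Taw.
    have := sizeE _ (hE _ Taw); rewrite /=; lia.
  have hs := sizeE _ (hE _ Taw); rewrite /= in hs.
  apply: (IH (a :: w)) => //.
    rewrite /=; lia.
  by move=> h; apply: nTw; exact: (hpar _ h).
move=> _ [w Tw <-].
case: (pselect (Tstar (SFin w))) => // nTw.
by exfalso; apply: (main n w) => //; rewrite leq_subr.
Qed.
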